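(* Let $k\geq 2$ be an integer, let $\mathcal{F}$ be a linear $k$-uniform family with maximum degree $\Delta=\Delta(\mathcal{F})$ and maximum matching size $\nu=\nu(\mathcal{F})$, and let $\mathcal{M}$ be a maximum matching of $\mathcal{F}$. Then $|D_1(\mathcal{F},\mathcal{M})|\leq\max\{(\Delta-1)\nu,\;k(k-1)\nu\}$.
   Context: A family is a finite collection of distinct subsets of a vertex set; it is $k$-uniform if every member has exactly $k$ elements and linear if any two distinct members share at most one vertex. A matching is a collection of pairwise disjoint members; $\nu(\mathcal{F})$ is the maximum size of a matching, and a maximum matching is one of that size. $\Delta(\mathcal{F})=\max_x|\{A\in\mathcal{F}:x\in A\}|$. $X_{\mathcal{M}}=\bigcup_{A\in\mathcal{M}}A$ and $D_1(\mathcal{F},\mathcal{M})=\{A\in\mathcal{F}:|A\cap X_{\mathcal{M}}|=1\}$. *)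

(* Defs.v *)
From mathcomp Require Import all_boot.
Set Implicit Arguments. Unset Strict Implicit. Unset Printing Implicit Defensive.

Section Families.
Variable T : finType.
Implicit Types (F M : {set {set T}}) (A B : {set T}) (x : T).

Definition uniform (k : nat) F := forall A, A \in F -> #|A| = k.

Definition linear F := forall A B, A \in F -> B \in F -> A != B -> #|A :&: B| <= 1.

Definition is_matching F M :=
  M \subset F /\ forall A B, A \in M -> B \in M -> A != B -> [disjoint A & B].

Definition nu F : nat :=
  \max_(M in powerset F | [forall A in M, forall B in M, (A != B) ==> [disjoint A & B]]) #|M|.

Definition is_max_matching F M := is_matching F M /\ #|M| = nu F.

Definition degree F x : nat := #|[set A in F | x \in A]|.
Definition Delta F : nat := \max_(x : T) degree F x.

Definition XM M : {set T} := \bigcup_(A in M) A.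

Definition D1 F M : {set {set T}} := [set A in F | #|A :&: XM M| == 1].
End Families.

(* Main.v *)
Require Import Defs.
From mathcomp Require Import all_boot.
Set Implicit Arguments. Unset Strict Implicit. Unset Printing Implicit Defensive.

Lemma card_bigcup_le (T I : finType) (P : pred I) (S : I -> {set T}) :
  #|\bigcup_(i | P i) S i| <= \sum_(i | P i) #|S i|.
Proof.
apply: (big_rec2 (fun (U : {set T}) n => #|U| <= n)); first by rewrite cards0.
move=> i n U _ h; apply: leq_trans (leq_card_setU _ _) _.
by rewrite leq_add2l.
Qed.

Section L.
Variables (T : finType) (k : nat) (F M : {set {set T}}).
Hypotheses (hk : 2 <= k) (hu : uniform k F) (hl : linear F)
  (hm : is_max_matching F M).

Definition Dv v := [set A in D1 F M | v \in A].

Lemma MF : M \subset F. Proof. by case: hm => [[]]. Qed.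
Lemma Mdisj A B : A \in M -> B \in M -> A != B -> [disjoint A & B].
Proof. by case: hm => [[_ h] _]; apply: h. Qed.

Lemma subXM B : B \in M -> B \subset XM M.
Proof. by move=> hB; apply: (bigcup_sup B). Qed.

Lemma Dv_F v A : A \in Dv v -> A \in F.
Proof. by rewrite !inE => /andP[/andP[]]. Qed.

Lemma Dv_in v A : A \in Dv v -> v \in A.
Proof. by rewrite !inE => /andP[]. Qed.

Lemma Dv_XM v A : v \in XM M -> A \in Dv v -> A :&: XM M = [set v].
Proof.
move=> hv; rewrite !inE => /andP[/andP[_ /cards1P[x hx]] hvA].
have : v \in A :&: XM M by rewrite inE hvA hv.
by rewrite hx inE => /eqP ->.
Qed.

Lemma Dv_notM v A : v \in XM M -> A \in Dv v -> A \notin M.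
Proof.
move=> hv hA; apply/negP => hAM.
have h1 := Dv_XM hv hA.
have : A :&: XM M = A by apply/setIidPl; apply: subXM.
move=> e; rewrite e in h1.
have := hu (Dv_F hA); rewrite h1 cards1 => ek.
by move: hk; rewrite -ek.
Qed.

Lemma Dv_notin v w A : v \in XM M -> w \in XM M -> v != w -> A \in Dv v ->
  w \notin A.
Proof.
move=> hv hw nvw hA; apply/negP => hwA.
have : w \in A :&: XM M by rewrite inE hwA hw.
by rewrite (Dv_XM hv hA) inE eq_sym (negbTE nvw).
Qed.

Lemma disj_new v B C A : B \in M -> v \in B -> C \in M -> C != B ->
  A \in Dv v -> [disjoint A & C].
Proof.
move=> hB hvB hC nCB hA.
have hv : v \in XM M by apply: (subsetP (subXM hB)).
apply/pred0P => x /=; apply/negP => /andP[hxA hxC].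
have hx : x \in A :&: XM M by rewrite inE hxA (subsetP (subXM hC)).
rewrite (Dv_XM hv hA) inE in hx; move/eqP: hx => hx; subst x.
have := Mdisj hC hB nCB; move/pred0P => /(_ v) /=.
by rewrite hxC hvB.
Qed.

Lemma aug B v1 v2 A1 A2 : B \in M -> v1 \in B -> v2 \in B -> v1 != v2 ->
  A1 \in Dv v1 -> A2 \in Dv v2 -> ~~ [disjoint A1 & A2].
Proof.
move=> hB h1 h2 n12 hA1 hA2; apply/negP => dA.
have hv1 : v1 \in XM M by apply: (subsetP (subXM hB)).
have hv2 : v2 \in XM M by apply: (subsetP (subXM hB)).
pose M' := A1 |: (A2 |: (M :\ B)).
have nA12 : A1 != A2.
  apply/eqP => e; move/pred0P: dA => /(_ v1) /=.
  by rewrite (Dv_in hA1) -e (Dv_in hA1).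
have A1M := Dv_notM hv1 hA1; have A2M := Dv_notM hv2 hA2.
have cM' : #|M'| = #|M|.+1.
  rewrite /M' !cardsU1 !in_setU1 !in_setD1 (negbTE nA12) (negbTE A1M)
    (negbTE A2M) !andbF /=.
  by rewrite (cardsD1 B M) hB.
have good : forall X, X \in M' ->
   [\/ X = A1, X = A2 | X \in M /\ X != B].
  move=> X; rewrite !in_setU1 in_setD1 => /orP[/eqP->|/orP[/eqP->|/andP[a b]]].
  - by constructor 1.
  - by constructor 2.
  - by constructor 3.
have hle : #|M'| <= nu F.
  rewrite /nu; apply: (@leq_bigmax_cond _ (fun M0 : {set {set T}} =>
    (M0 \in powerset F) &&
    [forall A in M0, forall B0 in M0, (A != B0) ==> [disjoint A & B0]])
    (fun M0 => #|M0|) M').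
  apply/andP; split.
    rewrite inE; apply/subsetP => X /good[->|->|[hX _]].
    - exact: Dv_F hA1.
    - exact: Dv_F hA2.
    - exact: (subsetP MF).
  apply/forallP => X; apply/implyP => hX; apply/forallP => Y; apply/implyP => hY.
  apply/implyP => nXY.
  case: (good X hX) => [eX|eX|[XM nXB]]; case: (good Y hY) => [eY|eY|[YM nYB]];
    subst.
  - by rewrite eqxx in nXY.
  - exact: dA.
  - exact: disj_new hB h1 YM nYB hA1.
  - by rewrite disjoint_sym.
  - by rewrite eqxx in nXY.
  - exact: disj_new hB h2 YM nYB hA2.
  - by rewrite disjoint_sym; exact: disj_new hB h1 XM nXB hA1.
  - by rewrite disjoint_sym; exact: disj_new hB h2 XM nXB hA2.
  - exact: Mdisj.
case: hm => _ e; move: hle; rewrite cM' e.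
by rewrite ltnn.
Qed.

Lemma case2 B v1 A1 v : B \in M -> v1 \in B -> A1 \in Dv v1 -> v \in B ->
  v != v1 -> #|Dv v| <= k.-1.
Proof.
move=> hB h1 hA1 hvB nv1.
have hv1 : v1 \in XM M by apply: (subsetP (subXM hB)).
have hv : v \in XM M by apply: (subsetP (subXM hB)).
pose f A := odflt v [pick w in A :&: A1].
have fP : forall A, A \in Dv v -> f A \in A :&: A1.
  move=> A hA; rewrite /f; case: pickP => [w hw //|h0].
  have := aug hB hvB h1 nv1 hA hA1.
  move/negP; case; apply/pred0P => x /=; have := h0 x; by rewrite inE.
have -> : #|Dv v| = #|f @: Dv v|.
  apply/esym/card_in_imset => A A' hA hA' efA.
  apply/eqP; apply/negP => /negP nAA'.
  have := hl (Dv_F hA) (Dv_F hA') nAA'.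
  have w1 := fP A hA; have w2 := fP A' hA'; rewrite efA in w1.
  move: w1 w2; rewrite !inE => /andP[wA wA1] /andP[wA' _].
  have nvw : v != f A'.
    apply/eqP => e; move: wA1; rewrite -e.
    have n1v : v1 != v by rewrite eq_sym.
    by rewrite (negbTE (Dv_notin hv1 hv n1v hA1)).
  have : [set v; f A'] \subset A :&: A'.
    apply/subsetP => x; rewrite !inE => /orP[]/eqP->.
    - by rewrite (Dv_in hA) (Dv_in hA').
    - by rewrite wA wA'.
  move/subset_leq_card; rewrite cards2 nvw => h1' h2'.
  by have := leq_trans h1' h2'.
have -> : k.-1 = #|A1 :\ v1|.
  by rewrite -(hu (Dv_F hA1)) (cardsD1 v1 A1) (Dv_in hA1).
apply: subset_leq_card; apply/subsetP => x /imsetP[A hA ->].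
have := fP A hA; rewrite !inE => /andP[hfA ->]; rewrite andbT.
apply/negP => /eqP e; rewrite e in hfA.
by rewrite (negbTE (Dv_notin hv hv1 nv1 hA)) in hfA.
Qed.

Lemma case1 B v : B \in M -> v \in B -> #|Dv v| <= (Delta F).-1.
Proof.
move=> hB hvB.
have hv : v \in XM M by apply: (subsetP (subXM hB)).
have BF : B \in F by apply: (subsetP MF).
have h : #|B |: Dv v| <= degree F v.
  apply: subset_leq_card; apply/subsetP => X.
  case/setU1P => [->|hX]; rewrite inE; first by rewrite BF hvB.
  by rewrite (Dv_F hX) (Dv_in hX).
have hBn : B \notin Dv v.
  apply/negP => hBD; have := Dv_notM hv hBD; by rewrite hB.
rewrite cardsU1 hBn add1n in h.
rewrite -subn1 leq_subRL; last by apply: leq_trans (leq_trans _ h) _;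
  [ | apply: (leq_bigmax v)].
by rewrite add1n; apply: leq_trans h _; apply: (leq_bigmax v).
Qed.

Lemma perB B : B \in M ->
  #|\bigcup_(v in B) Dv v| <= maxn (Delta F).-1 (k * (k - 1)).
Proof.
move=> hB.
case: (pickP [pred v in B | Dv v != set0]) => [v1 /andP[h1 n1] | h0]; last first.
  have -> : \bigcup_(v in B) Dv v = set0.
    apply/setP => A; rewrite inE; apply/negP => /bigcupP[v hv hA].
    by have := h0 v; rewrite /= hv /=; move/negbFE/eqP => e; rewrite e inE in hA.
  by rewrite cards0.
case: (pickP [pred v in B | (v != v1) && (Dv v != set0)]) =>
  [v2 /and3P[h2 n21 n2] | h0].
  apply: leq_trans (leq_maxr _ _).
  apply: leq_trans (card_bigcup_le _ _) _.
  have hB2 : #|B| = k by apply: hu; apply: (subsetP MF).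
  rewrite -{1}hB2 -sum_nat_const; apply: leq_sum => v hv.
  case/set0Pn: n1 => A1 hA1; case/set0Pn: n2 => A2 hA2.
  rewrite subn1; case: (eqVneq v v1) => [->|nv].
  - apply: (case2 hB h2 hA2 h1); by rewrite eq_sym.
  - exact: (case2 hB h1 hA1 hv nv).
apply: leq_trans (leq_maxl _ _).
apply: leq_trans (case1 hB h1).
apply: subset_leq_card; apply/subsetP => A /bigcupP[v hv hA].
case: (eqVneq v v1) => [<- //|nv].
have := h0 v; rewrite /= hv nv /=; move/negbFE/eqP => e; by rewrite e inE in hA.
Qed.

End L.

Theorem lemma3 (T : finType) (k : nat) (F M : {set {set T}}) :
  2 <= k -> uniform k F -> linear F -> is_max_matching F M ->
  #|D1 F M| <= maxn ((Delta F).-1 * nu F) (k * (k - 1) * nu F).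
Proof.
move=> hk hu hl hm.
have sub : D1 F M \subset \bigcup_(B in M) \bigcup_(v in B) Dv F M v.
  apply/subsetP => A hA; have := hA; rewrite inE => /andP[_ /cards1P[x hx]].
  have : x \in A :&: XM M by rewrite hx inE.
  rewrite inE => /andP[hxA /bigcupP[B hB hxB]].
  apply/bigcupP; exists B => //; apply/bigcupP; exists x => //.
  by rewrite inE hA hxA.
apply: leq_trans (subset_leq_card sub) _.
apply: leq_trans (card_bigcup_le _ _) _.
rewrite -maxnMl; case: (hm) => _ <-.
rewrite mulnC -sum_nat_const; apply: leq_sum => B hB.
exact: perB.
Qed.
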